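(* Let $\mu$ be a probability measure on a finitely generated group $\Gamma$ inducing an irreducible and aperiodic random walk $p(x,y)=\mu(x^{-1}y)$ with spectral radius $\rho$, which satisfies a ratio limit theorem with kernel $h$ such that $Ph=hP=\rho\,h$ (matrix products). Let $R_\mu=\{y\in\Gamma: H(x,y)=H(x,e)\text{ for all }x\in\Gamma\}$. Suppose that $R_\mu$ is infinite, and let $\xi$ be its unique accumulation point in the ratio limit boundary. If $x\mapsto H(x,\xi)$ is a minimal $\rho$-harmonic function, then $g\xi=\xi$ for every $g\in\Gamma$.
   Context: Ratio limit theorem: $h(x,y)=\lim_n p^{(n)}(x,y)/p^{(n)}(e,e)\in(0,\infty)$ exists for all $x,y\in\Gamma$ ($e$ the identity); ratio limit kernel $H(x,y)=h(x,y)/h(e,y)$; by group invariance $h(gx,gy)=h(x,y)$. The ratio limit compactification is the unique (up to homeomorphism fixing $\Gamma$) compact Hausdorff space containing $\Gamma$ as discrete open dense subset to which each $H(x,\cdot)$ extends continuously (extension also denoted $H$) and whose boundary points are separated by these extensions; the left action of $\Gamma$ on itself extends to a continuous action on it. $R_\mu$ is a subgroup; if infinite, it has a unique accumulation point $\xi$ in the boundary with $H(x,y)=H(x,\xi)$ for $y\in R_\mu$. A function $f:\Gamma\to\mathbb R$ is $\rho$-harmonic if $\sum_w p(x,w)f(w)=\rho f(x)$ for all $x$; a positive $\rho$-harmonic $f$ is minimal if $f(e)=1$ and $f$ is not a convex combination of two distinct positive $\rho$-harmonic functions with value $1$ at $e$. *)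

(* Defs.v *)
From HB Require Import structures.
From mathcomp Require Import all_boot all_order all_algebra.
From mathcomp Require Import all_classical all_reals all_analysis.
Set Implicit Arguments. Unset Strict Implicit. Unset Printing Implicit Defensive.
Import Order.TTheory GRing.Theory Num.Theory numFieldNormedType.Exports.
Local Open Scope classical_set_scope.
Local Open Scope ring_scope.

Record group_law (G : Type) := GroupLaw {
  gmul : G -> G -> G;
  ginv : G -> G;
  gone : G;
  gmulA : forall x y z, gmul x (gmul y z) = gmul (gmul x y) z;
  gmul1 : forall x, gmul gone x = x;
  gmulV : forall x, gmul (ginv x) x = gone }.

Inductive generated (G : eqType) (L : group_law G) (S : seq G) : G -> Prop :=
  | gen_one : generated L S (gone L)
  | gen_mul s x : s \in S -> generated L S x -> generated L S (gmul L s x)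
  | gen_mulinv s x : s \in S -> generated L S x ->
                     generated L S (gmul L (ginv L s) x).

Definition finitely_generated (G : eqType) (L : group_law G) :=
  exists S : seq G, forall x, generated L S x.

Section RW.
Context {R : realType} {G : choiceType} (L : group_law G) (mu : G -> R).

Definition ptrans (x y : G) : R := mu (gmul L (ginv L x) y).

Fixpoint pn (n : nat) (x y : G) : R :=
  match n with
  | 0 => if `[< x = y >] then 1 else 0
  | n.+1 => fine (\esum_(w in [set: G]) ((pn n x w) * ptrans w y)%:E)%E
  end.

Definition is_prob_measure :=
  (forall x, 0 <= mu x) /\ (\esum_(x in [set: G]) (mu x)%:E = 1%E).

Definition irreducible_rw := forall x y, exists n, 0 < pn n x y.

(* period of the identity (= of every state) is 1 *)
Definition aperiodic_rw :=
  forall d : nat, (forall n, 0 < pn n (gone L) (gone L) -> (d %| n)%N) -> d = 1%N.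

Definition spectral_radius : R :=
  limn_sup (fun n => pn n (gone L) (gone L) `^ (n%:R^-1)).

Definition ratio_limit_kernel (h : G -> G -> R) :=
  forall x y, 0 < h x y /\
    (fun n => pn n x y / pn n (gone L) (gone L)) @ \oo --> h x y.

Definition Ph_hP_eigen (rho : R) (h : G -> G -> R) :=
  (forall x y, \esum_(w in [set: G]) (ptrans x w * h w y)%:E = (rho * h x y)%:E)%E /\
  (forall x y, \esum_(w in [set: G]) (h x w * ptrans w y)%:E = (rho * h x y)%:E)%E.

Definition Hker (h : G -> G -> R) (x y : G) : R := h x y / h (gone L) y.

Definition Rmu (h : G -> G -> R) : set G :=
  [set y | forall x, Hker h x y = Hker h x (gone L)].

Definition pos_harmonic (rho : R) (f : G -> R) :=
  (forall x, 0 < f x) /\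
  (forall x, \esum_(w in [set: G]) (ptrans x w * f w)%:E = (rho * f x)%:E)%E.

Definition minimal_harmonic (rho : R) (f : G -> R) :=
  pos_harmonic rho f /\ f (gone L) = 1 /\
  ~ (exists f1 f2 (t : R), pos_harmonic rho f1 /\ pos_harmonic rho f2 /\
       f1 (gone L) = 1 /\ f2 (gone L) = 1 /\ f1 <> f2 /\ 0 < t < 1 /\
       f = (fun x => t * f1 x + (1 - t) * f2 x)).

(* (X, iota, Hext, act) is a (hence "the") ratio limit compactification:
   compact Hausdorff, iota embeds G as a discrete open dense subset,
   each H(x,.) extends continuously to Hext x, boundary points are separated
   by the extensions, and the left action extends continuously. *)
Definition ratio_limit_compactification (h : G -> G -> R) (X : topologicalType)
  (iota : G -> X) (Hext : G -> X -> R) (act : G -> X -> X) :=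
  compact [set: X] /\ hausdorff_space X /\ injective iota /\
  (forall y, open [set iota y]) /\ closure (range iota) = [set: X] /\
  (forall x, continuous (Hext x) /\ forall y, Hext x (iota y) = Hker h x y) /\
  (forall xi eta, ~ range iota xi -> ~ range iota eta ->
     (forall x, Hext x xi = Hext x eta) -> xi = eta) /\
  (forall g, continuous (act g) /\ forall y, act g (iota y) = iota (gmul L g y)).

End RW.

(* Main.v *)
Require Import Defs.
From HB Require Import structures.
From mathcomp Require Import all_boot all_order all_algebra.
From mathcomp Require Import all_classical all_reals all_analysis.
From mathcomp Require Import ring lra.
Import Order.TTheory GRing.Theory Num.Theory numFieldNormedType.Exports.
Local Open Scope classical_set_scope.
Local Open Scope ring_scope.

Section Grp.
Context {G : Type} (L : group_law G).
Local Notation m := (gmul L).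
Local Notation inv := (ginv L).
Local Notation e := (gone L).

Lemma gcancel a b : m (inv a) (m a b) = b.
Proof. by rewrite gmulA gmulV gmul1. Qed.

Lemma gmulV' x : m x (inv x) = e.
Proof.
have h1 : m (inv (inv x)) (m (inv x) (m x (inv x))) = m x (inv x).
  by rewrite gcancel.
by rewrite -[LHS]h1 (gcancel x (inv x)) gmulV.
Qed.

Lemma gmul1r x : m x e = x.
Proof. by rewrite -(gmulV L x) gmulA gmulV' gmul1. Qed.

Lemma gcancel' a b : m a (m (inv a) b) = b.
Proof. by rewrite gmulA gmulV' gmul1. Qed.

Lemma ginvK x : inv (inv x) = x.
Proof. by rewrite -[LHS]gmul1r -(gmulV L x) gcancel. Qed.

Lemma ginj a b c : m a b = m a c -> b = c.
Proof. by move=> H; rewrite -(gcancel a b) H gcancel. Qed.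

Lemma ginvM_mul g x y : m (inv (m g x)) (m g y) = m (inv x) y.
Proof.
have -> : m g y = m (m g x) (m (inv x) y) by rewrite -gmulA gcancel'.
by rewrite gcancel.
Qed.
End Grp.
Section ES.
Context {R : realType} {T : choiceType}.
Local Open Scope ereal_scope.

Lemma esumZ_pos (a : T -> \bar R) (r : R) : (0 < r)%R -> (forall i, 0 <= a i) ->
  \esum_(i in [set: T]) (r%:E * a i) = r%:E * \esum_(i in [set: T]) a i.
Proof.
move=> r0 a0; rewrite /esum -ereal_sup_pZl // image_comp.
congr ereal_sup; apply: eq_imagel => A [finA _] /=.
rewrite !fsbig_finite // ge0_sume_distrr //.
Qed.

Lemma esum_term_le (a : T -> \bar R) j : (forall i, 0 <= a i) ->
  a j <= \esum_(i in [set: T]) a i.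
Proof.
move=> a0; apply: esum_ge; exists [set j].
  by split; [exact: finite_set1|].
by rewrite fsbig_set1.
Qed.

Lemma esum_bij (f g : T -> T) (a : T -> \bar R) : cancel f g -> cancel g f ->
  \esum_(i in [set: T]) a i = \esum_(i in [set: T]) a (f i).
Proof.
move=> fg gf; apply: reindex_esum; split.
- by move=> x.
- by move=> x y _ _ /(congr1 g); rewrite !fg.
- by move=> y _; exists (g y) => //; rewrite gf.
Qed.
End ES.

Section RWL.
Context {R : realType} {G : choiceType} (L : group_law G) (mu : G -> R).
Local Notation m := (gmul L).
Local Notation inv := (ginv L).
Local Notation e := (gone L).

Lemma ptrans_inv g x y : ptrans L mu (m g x) (m g y) = ptrans L mu x y.
Proof. by rewrite /ptrans ginvM_mul. Qed.

Hypothesis mu0 : forall x, 0 <= mu x.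

Lemma ptrans_ge0 x y : 0 <= ptrans L mu x y.
Proof. exact: mu0. Qed.

Lemma pn_ge0 n x y : 0 <= pn L mu n x y.
Proof.
elim: n x y => [|n IH] x y /=; first by case: asboolP.
apply: fine_ge0; apply: esum_ge0 => w _.
by rewrite lee_fin; apply: mulr_ge0 => //; exact: ptrans_ge0.
Qed.

Lemma pn_inv n g x y : pn L mu n (m g x) (m g y) = pn L mu n x y.
Proof.
elim: n x y => [|n IH] x y /=.
  case: (asboolP (m g x = m g y)) => [/(ginj L) ->|H].
    by case: asboolP.
  by case: asboolP => // E; case: H; rewrite E.
congr fine.
rewrite (@esum_bij _ _ (m g) (m (inv g)) (fun w => (pn L mu n (m g x) w * ptrans L mu w (m g y))%:E)
   (gcancel L g) (gcancel' L g)).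
by apply: eq_esum => w _; rewrite IH ptrans_inv.
Qed.

Lemma h_inv (h : G -> G -> R) : ratio_limit_kernel L mu h ->
  forall g x y, h (m g x) (m g y) = h x y.
Proof.
move=> Hr g x y; have [_ c1] := Hr (m g x) (m g y); have [_ c2] := Hr x y.
have E : (fun n => pn L mu n (m g x) (m g y) / pn L mu n e e) =
         (fun n => pn L mu n x y / pn L mu n e e).
  by apply: funext => n; rewrite pn_inv.
rewrite E in c1.
exact: (cvg_unique _ c1 c2).
Qed.
End RWL.

Lemma cont_const_closure {R : realType} (X : topologicalType) (phi : X -> R)
  (E : set X) K t : continuous phi -> (forall p, E p -> phi p = K) ->
  closure E t -> phi t = K.
Proof.
move=> cphi EK clt; apply: contrapT => neq.
have V : nbhs (phi t) (~` [set K]).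
  apply: open_nbhs_nbhs; split => //.
  by rewrite openC; exact/accessible_closed_set1/hausdorff_accessible/Rhausdorff.
have := cphi t _ V => /clt [p [Ep Vp]].
by apply: Vp; rewrite /= EK.
Qed.


Theorem proposition6p3 (R : realType) (G : choiceType) (L : group_law G)
  (mu : G -> R) (h : G -> G -> R)
  (X : topologicalType) (iota : G -> X) (Hext : G -> X -> R) (act : G -> X -> X)
  (xi : X) :
  finitely_generated L ->
  is_prob_measure mu ->
  irreducible_rw L mu ->
  aperiodic_rw L mu ->
  ratio_limit_kernel L mu h ->
  Ph_hP_eigen L mu (spectral_radius L mu) h ->
  ratio_limit_compactification L h iota Hext act ->
  infinite_set (Rmu L h) ->
  ~ range iota xi ->
  limit_point (iota @` Rmu L h) xi ->
  (forall eta, ~ range iota eta -> limit_point (iota @` Rmu L h) eta -> eta = xi) ->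
  minimal_harmonic L mu (spectral_radius L mu) (fun x => Hext x xi) ->
  forall g, act g xi = xi.
Proof.
move=> _ [mu0 mu1] irr _ Hr [Ph hP] [_ [Xhaus [iinj [iopen [_ [Hcont [Hsep Hact]]]]]]].
move=> _ xnr xlim _ Hmin g.
set rho := spectral_radius L mu in Ph hP Hmin *.
set e := gone L in Hmin *.
have hpos x y : 0 < h x y := (Hr x y).1.
have hinv := @h_inv R G L mu h Hr.
pose f x := Hker L h x e.
have fpos x : 0 < f x by rewrite /f /Hker divr_gt0.
have fe : f e = 1 by rewrite /f /Hker divff // gt_eqF.
have xcl : closure (iota @` Rmu L h) xi by exact: subset_limit_point.
have A x : Hext x xi = f x.
  apply: (@cont_const_closure R X (Hext x) _ (f x) xi (Hcont x).1 _ xcl) => _ [y Ry <-].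
  by rewrite (Hcont x).2 Ry.
have fE : (fun x => Hext x xi) = f by apply: funext => x; rewrite A.
rewrite fE in Hmin.
have [[_ harmf] [_ Hnot]] := Hmin.
have C x : (\esum_(w in [set: G]) (mu w * f (gmul L w x))%:E = (rho * f x)%:E)%E.
  have := hP x e.
  rewrite (@esum_bij _ _ (ginv L) (ginv L) _ (ginvK L) (ginvK L)) => H.
  have -> : (rho * f x)%:E = (((h e e)^-1)%:E * (rho * h x e)%:E)%E.
    by rewrite -EFinM /f /Hker; congr (_%:E); field; rewrite gt_eqF.
  rewrite -H -esumZ_pos ?invr_gt0 //; last first.
    by move=> w; rewrite lee_fin mulr_ge0 // ?(ltW (hpos _ _)) //; exact: mu0.
  apply: eq_esum => w _; rewrite -EFinM; congr (_%:E).
  rewrite /ptrans ginvK gmul1r.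
  have -> : h x (ginv L w) = h (gmul L w x) e.
    by rewrite -(hinv w x (ginv L w)) gmulV'.
  by rewrite /f /Hker; field; rewrite gt_eqF.
have Cge x w : (mu w * f (gmul L w x) <= rho * f x)%R.
  rewrite -lee_fin -C; apply: (esum_term_le (fun w => (mu w * f (gmul L w x))%:E)).
  by move=> i; rewrite lee_fin mulr_ge0 // ?(ltW (fpos _)).
have [g1 g1pos] : exists g1, 0 < mu g1.
  apply: contrapT => Hn.
  have : (\esum_(x in [set: G]) (mu x)%:E = 0)%E.
    apply: esum1 => x _; congr (_%:E); apply/eqP; rewrite eq_le mu0 andbT.
    by rewrite leNgt; apply/negP => Hx; apply: Hn; exists x.
  by rewrite mu1 => -[] /eqP; rewrite oner_eq0.
have rpos : 0 < rho.
  have := Cge e g1; rewrite fe mulr1 => H1.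
  by apply: lt_le_trans H1; rewrite mulr_gt0.
have ptge x w : 0 <= ptrans L mu x w by exact: mu0.
have Emul g0 : 0 < mu g0 -> forall x, f (gmul L g0 x) = f g0 * f x.
  move=> g0pos.
  pose c := mu g0 * f g0 / rho.
  pose t := c / 2.
  pose f0 x := f (gmul L g0 x) / f g0.
  pose F x := (f x - t * f0 x) / (1 - t).
  have cpos : 0 < c by rewrite /c divr_gt0 // mulr_gt0.
  have f0pos x : 0 < f0 x by rewrite /f0 divr_gt0.
  have f0e : f0 e = 1 by rewrite /f0 gmul1r divff // gt_eqF.
  have ineq x : c * f0 x <= f x.
    have := Cge x g0; rewrite /c /f0.
    have -> : mu g0 * f g0 / rho * (f (gmul L g0 x) / f g0) = mu g0 * f (gmul L g0 x) / rho.
      by field; rewrite !gt_eqF.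
    by move=> H; rewrite ler_pdivrMr // [f x * _]mulrC.
  have c1 : c <= 1 by have := ineq e; rewrite f0e fe mulr1.
  have tpos : 0 < t by rewrite /t divr_gt0.
  have t1 : t < 1 by rewrite /t ltr_pdivrMr //; lra.
  have Fpos x : 0 < F x.
    rewrite /F divr_gt0 ?subr_gt0 //.
    have := ineq x; have := f0pos x => H1 H2.
    have : t * f0 x < c * f0 x by rewrite ltr_pM2r // /t ltr_pdivrMr //; lra.
    lra.
  have Fe : F e = 1 by rewrite /F f0e fe mulr1 divff // gt_eqF // subr_gt0.
  have f0h x : (\esum_(w in [set: G]) (ptrans L mu x w * f0 w)%:E = (rho * f0 x)%:E)%E.
    transitivity (\esum_(w in [set: G]) (((f g0)^-1)%:E * (ptrans L mu (gmul L g0 x) w * f w)%:E))%E.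
      rewrite [RHS](@esum_bij _ _ (gmul L g0) (gmul L (ginv L g0)) _ (gcancel L g0) (gcancel' L g0)).
      apply: eq_esum => w _; rewrite -EFinM ptrans_inv /f0; congr (_%:E).
      by field; rewrite gt_eqF.
    rewrite esumZ_pos ?invr_gt0 //; last by move=> w; rewrite lee_fin mulr_ge0 // ltW.
    rewrite harmf -EFinM /f0; congr (_%:E); by field; rewrite gt_eqF.
  have Fh x : (\esum_(w in [set: G]) (ptrans L mu x w * F w)%:E = (rho * F x)%:E)%E.
    have dec w : (ptrans L mu x w * f w)%:E =
       ((1 - t)%:E * (ptrans L mu x w * F w)%:E + t%:E * (ptrans L mu x w * f0 w)%:E)%E.
      rewrite -!EFinM -EFinD /F; congr (_%:E); field; rewrite gt_eqF // subr_gt0 //.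
    have := harmf x; rewrite (eq_esum (fun w _ => dec w)) esumD; last 2 first.
      - by move=> w _; rewrite mule_ge0 // lee_fin ?subr_ge0 ?(ltW t1) // mulr_ge0 // ltW.
      - by move=> w _; rewrite mule_ge0 // lee_fin ?(ltW tpos) // mulr_ge0 // ltW.
    rewrite esumZ_pos ?subr_gt0 //; last by move=> w; rewrite lee_fin mulr_ge0 // ltW.
    rewrite esumZ_pos //; last by move=> w; rewrite lee_fin mulr_ge0 // ltW.
    rewrite f0h.
    have : (0 <= \esum_(w in [set: G]) (ptrans L mu x w * F w)%:E)%E.
      by apply: esum_ge0 => w _; rewrite lee_fin mulr_ge0 // ltW.
    case: (\esum_(w in [set: G]) (ptrans L mu x w * F w)%:E)%E => [s| |] //.
    - move=> _; rewrite -!EFinM -EFinD => -[Hs]; congr (_%:E).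
      have tne : 1 - t != 0 by rewrite gt_eqF // subr_gt0.
      apply: (mulfI tne).
      have -> : (1 - t) * (rho * F x) = rho * (f x - t * f0 x).
        by rewrite /F; field.
      by rewrite mulrBr -Hs; ring.
    - by move=> _; rewrite gt0_muley ?lte_fin ?subr_gt0.
  have ff : f = (fun x => t * f0 x + (1 - t) * F x).
    apply: funext => x; rewrite /F; field; rewrite gt_eqF // subr_gt0 //.
  case: (pselect (f0 = F)) => [Heq|Hne]; last first.
    exfalso; apply: Hnot; exists f0, F, t; do !split => //.
    by rewrite tpos t1.
  move=> x; have := congr1 (fun k => k x) ff; rewrite /= -Heq.
  have -> : t * f0 x + (1 - t) * f0 x = f0 x by ring.
  by rewrite /f0 => ->; field; rewrite gt_eqF.
pose Sg y := forall x, f (gmul L y x) = f y * f x.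
have Se : Sg e by move=> x; rewrite /e gmul1 fe mul1r.
have SM a b : Sg a -> Sg b -> Sg (gmul L a b).
  move=> Sa Sb x; rewrite -gmulA Sa Sb.
  by have := Sa b => ->; rewrite mulrA.
have reach n y : 0 < pn L mu n e y -> Sg y.
  elim: n y => [|n IH] y /=.
    by case: asboolP => [<- //|_]; rewrite ltxx.
  move=> Hpos; apply: contrapT => NS.
  have z0 : (\esum_(w in [set: G]) (pn L mu n e w * ptrans L mu w y)%:E = 0)%E.
    apply: esum1 => w _; congr (_%:E).
    have p1 := @pn_ge0 R G L mu mu0 n e w; have p2 := ptge w y.
    case: (ltgtP 0 (pn L mu n e w)) p1 => // [a1|<-] _; last by rewrite mul0r.
    case: (ltgtP 0 (ptrans L mu w y)) p2 => // [a2|<-] _; last by rewrite mulr0.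
    exfalso; apply: NS.
    have -> : y = gmul L w (gmul L (ginv L w) y) by rewrite gcancel'.
    by apply: SM; [exact: IH | exact: Emul].
  by move: Hpos; rewrite z0 /= ltxx.
have Sall y : Sg y by have [n Hn] := irr e y; exact: (reach n).
have Gst x : Hext x (act g xi) = f x.
  apply: (@cont_const_closure R X (fun p => Hext x (act g p)) _ (f x) xi _ _ xcl).
    by move=> p; apply: continuous_comp; [exact: (Hact g).1 | exact: (Hcont x).1].
  move=> _ [y Ry <-]; rewrite (Hact g).2 (Hcont x).2 /Hker.
  set g' := ginv L g.
  have r1 : h x (gmul L g y) = h (gmul L g' x) y.
    by rewrite -{1}(gcancel' L g x) hinv.
  have r2 : h e (gmul L g y) = h g' y.
    by rewrite /e -(gmulV' L g) hinv.
  have Rz z : h z y = f z * h e y.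
    have := Ry z; rewrite /Hker => Hz.
    by rewrite /f /Hker -Hz; field; rewrite gt_eqF.
  rewrite r1 r2 Rz (Rz g') Sall; field; rewrite !gt_eqF //.
have nr : ~ range iota (act g xi).
  move=> [z _ Ez].
  pose y0 := gmul L (ginv L g) z.
  have Nb : nbhs xi (act g @^-1` [set iota z] `&` ~` [set iota y0]).
    apply: filterI.
      apply: (Hact g).1; rewrite -Ez; apply: open_nbhs_nbhs; split => //.
    apply: open_nbhs_nbhs; split.
      by rewrite openC; exact/accessible_closed_set1/hausdorff_accessible.
    by move=> /= E; apply: xnr; exists y0.
  have [p [_ [y Ry <-] [Hp1 Hp2]]] := xlim _ Nb.
  apply: Hp2; move: Hp1; rewrite /= (Hact g).2 => /iinj Hy.
  by rewrite /y0 -Hy gcancel.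
apply: Hsep => // x; rewrite A Gst //.
Qed.
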